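(* Let $d=1$, $S>0$, $c>0$, $\mu>0$, and consider the fields $\phi|_\pm$ and $\phi_m|_\pm$ described in the context. If for some $m\in\mathbb{N}$, some test function $f_m$ and some test function $f$ on $\mathbb{R}$ that does not vanish identically one has $\phi_m|_\pm(f_m)=\phi|_\pm(f)$, then $f$ cannot be supported in an interval of length smaller than $\frac{8}{\pi}S$.
   Context: $\mathbb{N}=\{0,1,\dots\}$. $q_0=0$; for $p\ge1$, $q_{2p}$ is the unique solution of $c^{-1}\tan(qS)=-q$ in $((p-\frac12)\frac\pi S,p\frac\pi S)$ and $q_{2p-1}$ the unique solution of $q\tan(qS)=c^{-1}$ in $((p-1)\frac\pi S,(p-\frac12)\frac\pi S)$. Let $\omega_m=\sqrt{q_m^2+\mu^2}$. Let $c_m>0$ be the normalization with $\int_{-S}^S|c_mS^{-1/2}\chi_m|^2dz+c\sum_{z=\pm S}|c_mS^{-1/2}\chi_m(z)|^2=1$, where $\chi_m=\cos(q_m z)$ ($m$ even), $\sin(q_mz)$ ($m$ odd); set $d_m=c_mS^{-1/2}\chi_m(S)$ (a non-zero real number). On the symmetric Fock space over $l^2(\mathbb{N})$ with $[a_m,a_{m'}^*]=\delta_{mm'}$, define the operator-valued distributions on $\mathbb{R}$ (time $t$) $\phi_m|_\pm(t)=(\pm)^m(2\omega_m)^{-1/2}(e^{-i\omega_mt}a_m+e^{i\omega_mt}a_m^* )$ and $\phi|_\pm(t)=\sum_m(\pm)^md_m(2\omega_m)^{-1/2}(e^{-i\omega_mt}a_m+e^{i\omega_mt}a_m^* )$;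 $\phi|_\pm$ is the restriction to the boundary component $z=\pm S$ of the quantized field of the $1+1$-dimensional strip with generalized Wentzell boundary conditions. Smearing: $\phi(f)=\int f(t)\phi(t)\,dt$. *)

(* Defs.v *)
From Stdlib Require Import Reals List.
From Coquelicot Require Import Coquelicot.
Open Scope R_scope.

(** Transverse spectrum: q m, m in N (characterisation by the defining
    equations on the stated intervals; the solution there is unique). *)
Definition is_q (S c : R) (q : nat -> R) : Prop :=
  q 0%nat = 0 /\
  (forall p : nat, (1 <= p)%nat ->
     (INR p - 1/2) * PI / S < q (2 * p)%nat < INR p * PI / S /\
     / c * tan (q (2 * p)%nat * S) = - q (2 * p)%nat) /\
  (forall p : nat, (1 <= p)%nat ->
     (INR p - 1) * PI / S < q (2 * p - 1)%nat < (INR p - 1/2) * PI / S /\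
     q (2 * p - 1)%nat * tan (q (2 * p - 1)%nat * S) = / c).

Definition chi (q : nat -> R) (m : nat) (z : R) : R :=
  if Nat.even m then cos (q m * z) else sin (q m * z).

Definition is_norm (S c : R) (q cm : nat -> R) : Prop :=
  forall m : nat, 0 < cm m /\
    RInt (fun z => (cm m / sqrt S * chi q m z) ^ 2) (- S) S
    + c * ((cm m / sqrt S * chi q m S) ^ 2 + (cm m / sqrt S * chi q m (- S)) ^ 2) = 1.

Definition dcoef (S : R) (q cm : nat -> R) (m : nat) : R := cm m / sqrt S * chi q m S.

Definition omega (mu : R) (q : nat -> R) (m : nat) : R := sqrt (q m ^ 2 + mu ^ 2).

Definition test_function (f : R -> C) : Prop :=
  (forall (n : nat) (x : R), ex_derive_n (fun t => Re (f t)) n x /\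
                             ex_derive_n (fun t => Im (f t)) n x) /\
  (exists A : R, forall t : R, A < Rabs t -> f t = RtoC 0).

(** hat f (w) = int_R f(t) e^{-i w t} dt  (for compactly supported f the
    integrals over [-n,n] are eventually constant). *)
Definition cexpi (x : R) : C := (cos x, sin x).
Definition fourier (f : R -> C) (w : R) : C :=
  (real (Lim_seq (fun n => RInt (fun t => Re (Cmult (f t) (cexpi (- w * t)))) (- INR n) (INR n))),
   real (Lim_seq (fun n => RInt (fun t => Im (Cmult (f t) (cexpi (- w * t)))) (- INR n) (INR n)))).

(** Symmetric Fock space over l^2(N), occupation-number representation.
    A configuration is n : nat -> nat (finitely supported); a vector is a
    coefficient function psi on configurations (psi n = <n|psi>); the finite
    particle vectors (finitely many finitely supported configurations) form
    the common dense domain of the field operators. *)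
Definition config := nat -> nat.
Definition fin_config (n : config) : Prop :=
  exists N : nat, forall k : nat, (N <= k)%nat -> n k = 0%nat.
Definition fock_vec := config -> C.
Definition finite_particle (psi : fock_vec) : Prop :=
  exists L : list config, (forall n, psi n <> RtoC 0 -> In n L) /\ List.Forall fin_config L.

Definition incr (n : config) (k : nat) : config :=
  fun j => if Nat.eqb j k then (n j + 1)%nat else n j.
Definition decr (n : config) (k : nat) : config :=
  fun j => if Nat.eqb j k then (n j - 1)%nat else n j.

(** a_k |n> = sqrt(n_k) |n - e_k>,  a_k^* |n> = sqrt(n_k + 1) |n + e_k>. *)
Definition ann (k : nat) (psi : fock_vec) : fock_vec :=
  fun n => Cmult (RtoC (sqrt (INR (n k + 1)))) (psi (incr n k)).
Definition cre (k : nat) (psi : fock_vec) : fock_vec :=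
  fun n => Cmult (RtoC (sqrt (INR (n k)))) (psi (decr n k)).

(** Complex series (on finite-particle vectors only finitely many terms are non-zero). *)
Definition csum (u : nat -> C) : C := (Series (fun k => Re (u k)), Series (fun k => Im (u k))).

Definition lin_field (alpha beta : nat -> C) (psi : fock_vec) : fock_vec :=
  fun n => csum (fun k => Cplus (Cmult (alpha k) (ann k psi n)) (Cmult (beta k) (cre k psi n))).

Definition op_eq (A B : fock_vec -> fock_vec) : Prop :=
  forall psi : fock_vec, finite_particle psi -> forall n : config, A psi n = B psi n.

Definition phi_mode_smeared (sgn mu : R) (q : nat -> R) (m : nat) (fm : R -> C)
  : fock_vec -> fock_vec :=
  lin_field
    (fun k => if Nat.eqb k m then Cmult (RtoC (sgn ^ m / sqrt (2 * omega mu q m))) (fourier fm (omega mu q m)) else RtoC 0)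
    (fun k => if Nat.eqb k m then Cmult (RtoC (sgn ^ m / sqrt (2 * omega mu q m))) (fourier fm (- omega mu q m)) else RtoC 0).

Definition phi_bdry_smeared (sgn S mu : R) (q cm : nat -> R) (f : R -> C)
  : fock_vec -> fock_vec :=
  lin_field
    (fun k => Cmult (RtoC (sgn ^ k * dcoef S q cm k / sqrt (2 * omega mu q k))) (fourier f (omega mu q k)))
    (fun k => Cmult (RtoC (sgn ^ k * dcoef S q cm k / sqrt (2 * omega mu q k))) (fourier f (- omega mu q k))).

(* Main.v *)
Require Import Defs.
From Stdlib Require Import Reals Lra Lia List Arith ZArith.
From Stdlib Require Import ClassicalEpsilon FunctionalExtensionality.
From Coquelicot Require Import Coquelicot.
Open Scope R_scope.


Definition derivs (F : nat -> R -> R) : Prop :=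
  forall (j : nat) (x : R), is_derive (F j) x (F (S j) x).

Lemma derivs_shift F : derivs F -> derivs (fun j => F (S j)).
Proof. intros H j x. apply H. Qed.

Lemma is_derive_cont (f : R -> R) x l : is_derive f x l -> continuity_pt f x.
Proof.
  intros H. apply derivable_continuous_pt. exists l.
  apply is_derive_Reals. exact H.
Qed.

Lemma rolle_is_derive (f g : R -> R) a b :
  (forall x, is_derive f x (g x)) -> a < b -> f a = 0 -> f b = 0 ->
  exists c, a < c < b /\ g c = 0.
Proof.
  intros Hd Hab Ha Hb.
  assert (pr : forall x, a < x < b -> derivable_pt f x).
  { intros x _. exists (g x). apply is_derive_Reals. apply Hd. }
  destruct (Rolle f a b pr) as [c [P Hc]].
  - intros x _. apply (is_derive_cont f x (g x)), Hd.
  - exact Hab.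
  - congruence.
  - exists c. split. exact P. rewrite <- Hc. symmetry. apply derive_pt_eq_0.
    apply is_derive_Reals. apply Hd.
Qed.

Lemma gen_rolle : forall N (F : nat -> R -> R) (z : nat -> R),
  derivs F ->
  (forall i, (i < N)%nat -> z i < z (S i)) ->
  (forall i, (i <= N)%nat -> F 0%nat (z i) = 0) ->
  exists xi, F N xi = 0.
Proof.
  induction N as [|N IH]; intros F z HF Hz H0.
  - exists (z 0%nat). apply H0. lia.
  - assert (Hy : forall i, exists y, (i <= N)%nat -> z i < y < z (S i) /\ F 1%nat y = 0).
    { intros i. destruct (le_lt_dec i N) as [Hi|Hi].
      - destruct (rolle_is_derive (F 0%nat) (F 1%nat) (z i) (z (S i))) as [c [Hc1 Hc2]].
        + apply HF.
        + apply Hz. lia.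
        + apply H0. lia.
        + apply H0. lia.
        + exists c. intros _. split; assumption.
      - exists 0. intros; lia. }
    set (y := fun i => proj1_sig (constructive_indefinite_description _ (Hy i))).
    assert (Hyp : forall i, (i <= N)%nat -> z i < y i < z (S i) /\ F 1%nat (y i) = 0).
    { intros i Hi. unfold y. destruct (constructive_indefinite_description _ (Hy i)) as [w Hw].
      simpl. apply Hw. exact Hi. }
    destruct (IH (fun j => F (S j)) y (derivs_shift F HF)) as [xi Hxi].
    + intros i Hi. destruct (Hyp i) as [[A B] _]; [lia|].
      destruct (Hyp (S i)) as [[C D] _]; [lia|]. lra.
    + intros i Hi. apply Hyp. exact Hi.
    + exists xi. exact Hxi.
Qed.

Fixpoint prodl (l : list R) (w : R) : R :=
  match l with nil => 1 | z :: l' => (w - z) * prodl l' w end.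

Lemma prodl_in l y : In y l -> prodl l y = 0.
Proof.
  induction l as [|z l IH]; simpl; intros H; [contradiction|].
  destruct H as [H|H].
  - subst. ring.
  - rewrite IH by exact H. ring.
Qed.

Lemma is_derive_eq (f : R -> R) (x l l' : R) : is_derive f x l -> l = l' -> is_derive f x l'.
Proof. intros H ->. exact H. Qed.

Lemma isd_plus (f g : R -> R) (x a b : R) : is_derive f x a -> is_derive g x b -> is_derive (fun t => f t + g t) x (a + b).
Proof. intros H1 H2. apply is_derive_Reals. apply is_derive_Reals in H1, H2.
  apply (derivable_pt_lim_plus f g x a b H1 H2). Qed.
Lemma isd_minus (f g : R -> R) (x a b : R) : is_derive f x a -> is_derive g x b -> is_derive (fun t => f t - g t) x (a - b).
Proof. intros H1 H2. apply is_derive_Reals. apply is_derive_Reals in H1, H2.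
  apply (derivable_pt_lim_minus f g x a b H1 H2). Qed.
Lemma isd_mult (f g : R -> R) (x a b : R) : is_derive f x a -> is_derive g x b -> is_derive (fun t => f t * g t) x (a * g x + f x * b).
Proof. intros H1 H2. apply is_derive_Reals. apply is_derive_Reals in H1, H2.
  replace (a * g x + f x * b) with (a * g x + f x * b) by ring.
  pose proof (derivable_pt_lim_mult f g x a b H1 H2) as H. replace (a * g x + f x * b) with (a * g x + f x * b) by ring.
  exact H. Qed.
Lemma isd_scal (c : R) (f : R -> R) (x a : R) : is_derive f x a -> is_derive (fun t => c * f t) x (c * a).
Proof. intros H1. apply is_derive_Reals. apply is_derive_Reals in H1.
  apply (derivable_pt_lim_scal f c x a H1). Qed.
Lemma isd_id (x : R) : is_derive (fun t : R => t) x 1.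
Proof. apply is_derive_Reals. apply derivable_pt_lim_id. Qed.

Lemma is_derive_const' (c x : R) : is_derive (fun _ : R => c) x 0.
Proof. apply (is_derive_const c x). Qed.

Lemma node_poly : forall l, exists P : nat -> R -> R,
  (forall w, P 0%nat w = prodl l w) /\ derivs P /\
  (forall w, P (length l) w = INR (fact (length l))) /\
  (forall j w, (length l < j)%nat -> P j w = 0).
Proof.
  induction l as [|z l IH].
  - exists (fun j _ => match j with O => 1 | S _ => 0 end). split; [|split; [|split]].
    + intros w; reflexivity.
    + intros j0 x0. destruct j0; apply is_derive_const'.
    + intros w; reflexivity.
    + intros jj w Hj. destruct jj; [simpl in Hj; lia| reflexivity].
  - destruct IH as [P [HP0 [HPd [HPn HPz]]]].
    exists (fun j w => (w - z) * P j w + INR j * P (pred j) w). split; [|split; [|split]].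
    + intros w. simpl. rewrite HP0. ring.
    + intros j x.
      assert (H1 : is_derive (fun w => (w - z) * P j w) x (1 * P j x + (x - z) * P (S j) x)).
      { eapply is_derive_eq. apply (isd_mult (fun w => w - z) (P j) x 1 (P (S j) x)).
        - eapply is_derive_eq.
          + apply (isd_minus (fun w => w) (fun _ => z) x 1 0).
            apply isd_id. apply is_derive_const'.
          + ring.
        - apply HPd.
        - ring. }
      assert (H2 : is_derive (fun w => INR j * P (pred j) w) x (INR j * P (S (pred j)) x)).
      { apply (isd_scal (INR j) (P (pred j)) x (P (S (pred j)) x)). apply HPd. }
      eapply is_derive_eq.
      * apply (isd_plus _ _ x _ _ H1 H2).
      * destruct j as [|j].
        -- simpl. ring.
        -- cbn [pred]. rewrite (S_INR (S j)). ring.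
    + intros w. simpl length. rewrite (HPz (S (length l)) w) by lia.
      simpl pred. rewrite HPn. rewrite fact_simpl, mult_INR. ring.
    + intros j w Hj. simpl in Hj. rewrite (HPz j w) by lia.
      rewrite (HPz (pred j) w) by lia. ring.
Qed.

Lemma interp_bound (F : nat -> R -> R) (A rho x : R) (l : list R) (z : nat -> R) :
  derivs F -> (forall j w, Rabs (F j w) <= A * rho ^ j) ->
  (forall i, (i < length l)%nat -> z i < z (S i)) ->
  (forall i, (i <= length l)%nat -> z i = x \/ In (z i) l) ->
  (forall y, In y l -> F 0%nat y = 0) ->
  prodl l x <> 0 ->
  Rabs (F 0%nat x) <= A * rho ^ (length l) / INR (fact (length l)) * Rabs (prodl l x).
Proof.
  intros HF HB Hz Hzin H0 Hp.
  destruct (node_poly l) as [P [HP0 [HPd [HPn _]]]].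
  set (c := F 0%nat x / prodl l x).
  set (psi := fun j w => F j w - c * P j w).
  assert (Hpsi : derivs psi).
  { intros j w. unfold psi.
    apply (isd_minus (F j) (fun w => c * P j w) w).
    apply HF. apply (isd_scal c (P j) w). apply HPd. }
  destruct (gen_rolle (length l) psi z Hpsi Hz) as [xi Hxi].
  { intros i Hi. unfold psi. rewrite HP0.
    destruct (Hzin i Hi) as [E|E].
    - rewrite E. unfold c. field. exact Hp.
    - rewrite (H0 _ E), (prodl_in _ _ E). ring. }
  unfold psi in Hxi. rewrite HPn in Hxi.
  assert (Hf : INR (fact (length l)) > 0) by (apply lt_0_INR, lt_O_fact).
  assert (Hc : c = F (length l) xi / INR (fact (length l))).
  { field_simplify_eq; [|lra]. lra. }
  assert (E : F 0%nat x = c * prodl l x) by (unfold c; field; exact Hp).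
  rewrite E, Rabs_mult, Hc. unfold Rdiv. rewrite Rabs_mult.
  rewrite (Rabs_inv (INR _)), (Rabs_right (INR _)) by lra.
  apply Rmult_le_compat_r; [apply Rabs_pos|].
  apply Rmult_le_compat_r. left; apply Rinv_0_lt_compat; lra. apply HB.
Qed.


Lemma cpt_plus (f g : R -> R) x : continuity_pt f x -> continuity_pt g x -> continuity_pt (fun t => f t + g t) x.
Proof. apply continuity_pt_plus. Qed.
Lemma cpt_minus (f g : R -> R) x : continuity_pt f x -> continuity_pt g x -> continuity_pt (fun t => f t - g t) x.
Proof. apply continuity_pt_minus. Qed.
Lemma cpt_mult (f g : R -> R) x : continuity_pt f x -> continuity_pt g x -> continuity_pt (fun t => f t * g t) x.
Proof. apply continuity_pt_mult. Qed.
Lemma cpt_opp (f : R -> R) x : continuity_pt f x -> continuity_pt (fun t => - f t) x.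
Proof. apply continuity_pt_opp. Qed.
Lemma cpt_const (c x : R) : continuity_pt (fun _ => c) x.
Proof. apply continuity_pt_const. intros a b; reflexivity. Qed.
Lemma cpt_id (x : R) : continuity_pt (fun t => t) x.
Proof. apply derivable_continuous_pt, derivable_pt_id. Qed.
Lemma cpt_comp (f g : R -> R) x : continuity_pt f x -> continuity_pt g (f x) -> continuity_pt (fun t => g (f t)) x.
Proof. intros; apply (continuity_pt_comp f g x); assumption. Qed.
Lemma cpt_pow (f : R -> R) n x : continuity_pt f x -> continuity_pt (fun t => f t ^ n) x.
Proof. intros H. induction n as [|n IH]; simpl. apply cpt_const. apply cpt_mult; assumption. Qed.
Lemma cpt_cos (f : R -> R) x : continuity_pt f x -> continuity_pt (fun t => cos (f t)) x.
Proof. intros H. apply (cpt_comp f cos x H). apply continuity_cos. Qed.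
Lemma cpt_sin (f : R -> R) x : continuity_pt f x -> continuity_pt (fun t => sin (f t)) x.
Proof. intros H. apply (cpt_comp f sin x H). apply continuity_sin. Qed.
Lemma cpt_cont (f : R -> R) x : continuity_pt f x -> continuous f x.
Proof. intros H. apply continuity_pt_filterlim. exact H. Qed.

Ltac cpt := repeat first [ apply cpt_plus | apply cpt_minus | apply cpt_mult | apply cpt_opp
   | apply cpt_pow | apply cpt_cos | apply cpt_sin | apply cpt_id | apply cpt_const | assumption | auto ].

Lemma exRInt_cpt (f : R -> R) a b : (forall t, continuity_pt f t) -> ex_RInt f a b.
Proof. intros H. apply (@ex_RInt_continuous R_CompleteNormedModule). intros z _. apply cpt_cont, H. Qed.

Definition kern (c : R) (n : nat) (al be : R -> R) (w t : R) : R :=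
  (t - c)^n * (al t * cos (w * (t - c)) + be t * sin (w * (t - c))).

Definition Phi (a b c : R) (n : nat) (al be : R -> R) (w : R) : R :=
  RInt (fun t => kern c n al be w t) a b.

Lemma kern_cpt c n al be w : (forall t, continuity_pt al t) -> (forall t, continuity_pt be t) ->
  forall t, continuity_pt (fun t => kern c n al be w t) t.
Proof. intros Ha Hb t. unfold kern. cpt. Qed.

Lemma kern_deriv c n al be w t :
  is_derive (fun w => kern c n al be w t) w (kern c (S n) be (fun s => - al s) w t).
Proof.
  unfold kern. auto_derive. auto. simpl. ring.
Qed.

Lemma c2_v (g : R -> R) x y : continuity_pt g y -> continuity_2d_pt (fun u v => g v) x y.
Proof. intros H. apply (continuity_1d_2d_pt_comp g (fun u v => v) x y H). apply continuity_2d_pt_id2. Qed.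

Lemma kern_c2 c n al be w t : continuity_pt al t -> continuity_pt be t ->
  continuity_2d_pt (fun u v => kern c n al be u v) w t.
Proof.
  intros Ha Hb. unfold kern.
  apply (continuity_2d_pt_mult (fun u v => (v - c)^n)).
  { apply (c2_v (fun v => (v - c)^n)). cpt. }
  apply (continuity_2d_pt_plus (fun u v => al v * cos (u * (v - c)))).
  - apply (continuity_2d_pt_mult (fun u v => al v)). apply (c2_v al); auto.
    apply (continuity_1d_2d_pt_comp cos (fun u v => u * (v - c))). apply continuity_cos.
    apply (continuity_2d_pt_mult (fun u v => u)). apply continuity_2d_pt_id1.
    apply (c2_v (fun v => v - c)). cpt.
  - apply (continuity_2d_pt_mult (fun u v => be v)). apply (c2_v be); auto.
    apply (continuity_1d_2d_pt_comp sin (fun u v => u * (v - c))). apply continuity_sin.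
    apply (continuity_2d_pt_mult (fun u v => u)). apply continuity_2d_pt_id1.
    apply (c2_v (fun v => v - c)). cpt.
Qed.

Lemma Phi_deriv a b c n al be w :
  (forall t, continuity_pt al t) -> (forall t, continuity_pt be t) ->
  is_derive (Phi a b c n al be) w (Phi a b c (S n) be (fun s => - al s) w).
Proof.
  intros Ha Hb. unfold Phi.
  assert (E : forall u t, Derive (fun z => kern c n al be z t) u = kern c (S n) be (fun s => - al s) u t).
  { intros u t. apply is_derive_unique. apply kern_deriv. }
  assert (E2 : (fun t => Derive (fun u => kern c n al be u t) w) = (fun t => kern c (S n) be (fun s => - al s) w t)).
  { apply functional_extensionality. intros t. apply E. }
  rewrite <- E2.
  apply (is_derive_RInt_param (fun w t => kern c n al be w t)).
  - apply filter_forall. intros x t _. eexists. apply kern_deriv.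
  - intros t _. apply (continuity_2d_pt_ext (fun u v => kern c (S n) be (fun s => - al s) u v)).
    + intros x y. symmetry. apply E.
    + apply kern_c2. auto. apply cpt_opp. auto.
  - apply filter_forall. intros y. apply exRInt_cpt. apply kern_cpt; auto.
Qed.

Fixpoint rot (n : nat) (p : (R -> R) * (R -> R)) : (R -> R) * (R -> R) :=
  match n with O => p | S n => (snd (rot n p), fun t => - fst (rot n p) t) end.

Definition Fam a b c p n w := Phi a b c n (fst (rot n p)) (snd (rot n p)) w.

Lemma rot_cont p : (forall t, continuity_pt (fst p) t) -> (forall t, continuity_pt (snd p) t) ->
  forall n, (forall t, continuity_pt (fst (rot n p)) t) /\ (forall t, continuity_pt (snd (rot n p)) t).
Proof.
  intros H1 H2 n. induction n as [|n [IH1 IH2]]; simpl; split; auto.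
  intros t. apply cpt_opp. auto.
Qed.

Lemma Fam_derivs a b c p : (forall t, continuity_pt (fst p) t) -> (forall t, continuity_pt (snd p) t) ->
  derivs (Fam a b c p).
Proof.
  intros H1 H2 j w. unfold Fam. destruct (rot_cont p H1 H2 j) as [C1 C2].
  apply (Phi_deriv a b c j _ _ w C1 C2).
Qed.

Lemma rot_bound p a b Mb : (forall t, a <= t <= b -> Rabs (fst p t) <= Mb /\ Rabs (snd p t) <= Mb) ->
  forall n t, a <= t <= b -> Rabs (fst (rot n p) t) <= Mb /\ Rabs (snd (rot n p) t) <= Mb.
Proof.
  intros H n. induction n as [|n IH]; intros t Ht; simpl. auto.
  destruct (IH t Ht). rewrite Rabs_Ropp. auto.
Qed.

Lemma abs_cos_le x : Rabs (cos x) <= 1.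
Proof. destruct (COS_bound x). apply Rabs_le. lra. Qed.
Lemma abs_sin_le x : Rabs (sin x) <= 1.
Proof. destruct (SIN_bound x). apply Rabs_le. lra. Qed.

Lemma kern_bound c n al be w t rho Mb : Rabs (t - c) <= rho -> Rabs (al t) <= Mb -> Rabs (be t) <= Mb ->
  Rabs (kern c n al be w t) <= rho ^ n * (2 * Mb).
Proof.
  intros Ht Ha Hb. unfold kern. rewrite Rabs_mult, <- RPow_abs.
  apply Rmult_le_compat. apply pow_le, Rabs_pos. apply Rabs_pos.
  apply pow_incr. split. apply Rabs_pos. exact Ht.
  eapply Rle_trans. apply Rabs_triang. rewrite !Rabs_mult.
  pose proof (abs_cos_le (w * (t - c))). pose proof (abs_sin_le (w * (t - c))).
  pose proof (Rabs_pos (al t)). pose proof (Rabs_pos (be t)).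
  pose proof (Rabs_pos (cos (w * (t - c)))). pose proof (Rabs_pos (sin (w * (t - c)))).
  nra.
Qed.

Lemma Phi_bound a b c n al be w rho Mb : a <= b ->
  (forall t, continuity_pt al t) -> (forall t, continuity_pt be t) ->
  (forall t, a <= t <= b -> Rabs (t - c) <= rho /\ Rabs (al t) <= Mb /\ Rabs (be t) <= Mb) ->
  Rabs (Phi a b c n al be w) <= (b - a) * (2 * Mb) * rho ^ n.
Proof.
  intros Hab Ha Hb H. unfold Phi.
  replace ((b - a) * (2 * Mb) * rho ^ n) with ((b - a) * (rho ^ n * (2 * Mb))) by ring.
  apply abs_RInt_le_const. exact Hab.
  apply exRInt_cpt. apply kern_cpt; auto.
  intros t Ht. destruct (H t Ht) as [H1 [H2 H3]]. apply kern_bound; auto.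
Qed.

Lemma Fam_bound a b c p rho Mb : a <= b ->
  (forall t, continuity_pt (fst p) t) -> (forall t, continuity_pt (snd p) t) ->
  (forall t, a <= t <= b -> Rabs (t - c) <= rho /\ Rabs (fst p t) <= Mb /\ Rabs (snd p t) <= Mb) ->
  forall j w, Rabs (Fam a b c p j w) <= (b - a) * (2 * Mb) * rho ^ j.
Proof.
  intros Hab H1 H2 H j w. unfold Fam. destruct (rot_cont p H1 H2 j) as [C1 C2].
  apply Phi_bound; auto. intros t Ht. destruct (H t Ht) as [Ha [Hb Hc]].
  destruct (rot_bound p a b Mb) with (n := j) (t := t) as [D1 D2]; auto.
  intros s Hs. destruct (H s Hs) as [_ [X Y]]. auto.
Qed.


Fixpoint nodes (om : nat -> R) (K0 K : nat) : list R :=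
  match K with O => nil | S K => (- om (K0 + K)%nat) :: om (K0 + K)%nat :: nodes om K0 K end.

Lemma nodes_length om K0 K : length (nodes om K0 K) = (2 * K)%nat.
Proof. induction K; simpl; [reflexivity| rewrite IHK; lia]. Qed.

Lemma nodes_in om K0 K i : (i < K)%nat -> In (- om (K0 + i)%nat) (nodes om K0 K) /\ In (om (K0 + i)%nat) (nodes om K0 K).
Proof.
  induction K as [|K IH]; intros Hi; [lia|]. simpl.
  destruct (Nat.eq_dec i K) as [->|Hne].
  - split; auto.
  - destruct IH as [A B]; [lia|]. split; auto.
Qed.

Lemma nodes_all om K0 K (P : R -> Prop) : (forall i, (i < K)%nat -> P (- om (K0 + i)%nat) /\ P (om (K0 + i)%nat)) ->
  forall y, In y (nodes om K0 K) -> P y.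
Proof.
  induction K as [|K IH]; simpl; intros H y Hy; [contradiction|].
  destruct (H K ltac:(lia)) as [H1 H2].
  destruct Hy as [<-|[<-|Hy]].
  - exact H1.
  - exact H2.
  - apply IH; [|exact Hy]. intros i Hi; apply H; lia.
Qed.

Lemma prodl_nodes_S om K0 K x : prodl (nodes om K0 (S K)) x =
  (x + om (K0 + K)%nat) * (x - om (K0 + K)%nat) * prodl (nodes om K0 K) x.
Proof. simpl. ring. Qed.

Lemma zero_everywhere (F : nat -> R -> R) (A rho delta mu : R) (om : nat -> R) (m : nat)
  (HF : derivs F) (HB : forall j w, Rabs (F j w) <= A * rho ^ j) (HA : 0 <= A)
  (Hrho : 0 < rho) (Hdel : 0 < delta) (Hr : rho * delta / 2 < 1) (Hmu : 0 <= mu)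
  (Hom_lt : forall k l, (k < l)%nat -> om k < om l)
  (Hom_lo : forall k, (INR k - 1) * delta < om k)
  (Hom_hi : forall k, om k <= INR k * delta + mu)
  (Hzero : forall k, k <> m -> F 0%nat (om k) = 0 /\ F 0%nat (- om k) = 0) :
  forall x, F 0%nat x = 0.
Proof.
  intros x.
  destruct (INR_unbounded (Rabs x / delta + 1)) as [N1 HN1].
  set (K0 := Nat.max (S m) N1).
  assert (HK0m : (m < K0)%nat) by (unfold K0; lia).
  assert (HK0x : Rabs x <= (INR K0 - 1) * delta).
  { assert (INR N1 <= INR K0) by (apply le_INR; unfold K0; lia).
    apply (Rmult_le_reg_r (/ delta)). apply Rinv_0_lt_compat; lra.
    replace ((INR K0 - 1) * delta * / delta) with (INR K0 - 1) by (field; lra).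
    unfold Rdiv in HN1. lra. }
  assert (Hbig : forall i, Rabs x < om (K0 + i)%nat).
  { intros i. eapply Rle_lt_trans. exact HK0x. eapply Rle_lt_trans. 2: apply Hom_lo.
    apply Rmult_le_compat_r. lra. rewrite plus_INR. pose proof (pos_INR i). lra. }
  set (M := INR K0 + (mu + Rabs x) / delta).
  assert (HM : 0 <= M).
  { unfold M. pose proof (pos_INR K0). assert (0 <= (mu + Rabs x) / delta).
    { apply Rdiv_le_0_compat. pose proof (Rabs_pos x). lra. lra. } lra. }
  assert (Hint : forall K, Rabs (F 0%nat x) <=
      A * rho ^ (2 * K) / INR (fact (2 * K)) * Rabs (prodl (nodes om K0 K) x)).
  { intros K. rewrite <- (nodes_length om K0 K).
    set (z := fun i => if Nat.ltb i K then - om (K0 + (K - 1 - i))%nat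
                       else if Nat.eqb i K then x else om (K0 + (i - K - 1))%nat).
    apply (interp_bound F A rho x (nodes om K0 K) z HF HB).
    - rewrite nodes_length. intros i Hi. unfold z.
      destruct (Nat.ltb_spec i K); destruct (Nat.ltb_spec (S i) K);
      destruct (Nat.eqb_spec i K); destruct (Nat.eqb_spec (S i) K); try lia.
      + apply Ropp_lt_contravar. apply Hom_lt. lia.
      + pose proof (Hbig (K - 1 - i)%nat). pose proof (Rle_abs (-x)). rewrite Rabs_Ropp in *. lra.
      + pose proof (Hbig (S i - K - 1)%nat). pose proof (Rle_abs x). lra.
      + apply Hom_lt. lia.
    - rewrite nodes_length. intros i Hi. unfold z.
      destruct (Nat.ltb_spec i K); destruct (Nat.eqb_spec i K).
      + lia.
      + right. apply nodes_in. lia.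
      + left; reflexivity.
      + right. apply nodes_in. lia.
    - apply nodes_all. intros i Hi. destruct (Hzero (K0 + i)%nat) as [Z1 Z2]. lia. split; assumption.
    - intros Hp. assert (Hne : forall y, In y (nodes om K0 K) -> x - y <> 0).
      { apply nodes_all. intros i Hi. pose proof (Hbig i). pose proof (Rle_abs x).
        pose proof (Rle_abs (-x)). rewrite Rabs_Ropp in *. split; lra. }
      clear z. induction K as [|K IH]; simpl in Hp. lra.
      apply Rmult_integral in Hp. destruct Hp as [Hp|Hp].
      + apply (Hne (- om (K0 + K)%nat)). simpl; auto. exact Hp.
      + apply Rmult_integral in Hp. destruct Hp as [Hp|Hp].
        * apply (Hne (om (K0 + K)%nat)). simpl; auto. exact Hp.
        * apply IH. exact Hp. intros y Hy. apply Hne. simpl; auto. }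
  set (fac := fun K : nat => rho ^ 2 * ((INR K + M) * delta) ^ 2 / ((2 * INR K + 1) * (2 * INR K + 2))).
  assert (Hfac0 : forall K, 0 <= fac K).
  { intros K. unfold fac. pose proof (pos_INR K). apply Rdiv_le_0_compat.
    apply Rmult_le_pos; apply pow2_ge_0. apply Rmult_lt_0_compat; lra. }
  set (T := fix T (K : nat) : R := match K with O => A | S K => T K * fac K end).
  assert (HT0 : forall K, 0 <= T K).
  { induction K as [|K IH]; simpl. exact HA. apply Rmult_le_pos; auto. }
  assert (HTb : forall K, A * rho ^ (2 * K) / INR (fact (2 * K)) * Rabs (prodl (nodes om K0 K) x) <= T K).
  { induction K as [|K IH].
    - simpl. rewrite Rabs_R1. lra.
    - rewrite prodl_nodes_S.
      set (P := prodl (nodes om K0 K) x). set (o := om (K0 + K)%nat).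
      replace (2 * S K)%nat with (S (S (2 * K))) by lia.
      rewrite fact_simpl, fact_simpl, !mult_INR.
      assert (Hf : 0 < INR (fact (2 * K))) by (apply lt_0_INR, lt_O_fact).
      rewrite (S_INR (S (2 * K))), (S_INR (2 * K)), mult_INR.
      change (INR 2) with 2.
      assert (Ho : Rabs x < o) by (unfold o; apply Hbig).
      assert (Hxo : Rabs (x + o) * Rabs (x - o) <= ((INR K + M) * delta) ^ 2).
      { assert (E1 : Rabs (x + o) <= Rabs x + o).
        { eapply Rle_trans. apply Rabs_triang. rewrite (Rabs_right o). lra. pose proof (Rabs_pos x). lra. }
        assert (E2 : Rabs (x - o) <= Rabs x + o).
        { eapply Rle_trans. apply Rabs_triang. rewrite Rabs_Ropp, (Rabs_right o). lra. pose proof (Rabs_pos x). lra. }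
        assert (E3 : Rabs x + o <= (INR K + M) * delta).
        { unfold o, M. pose proof (Hom_hi (K0 + K)%nat). rewrite plus_INR in H.
          replace ((INR K + (INR K0 + (mu + Rabs x) / delta)) * delta) with
            ((INR K0 + INR K) * delta + mu + Rabs x) by (field; lra). lra. }
        pose proof (Rabs_pos (x + o)). pose proof (Rabs_pos (x - o)). simpl.
        apply Rle_trans with ((Rabs x + o) * (Rabs x + o)). apply Rmult_le_compat; lra.
        pose proof (Rabs_pos x). apply Rmult_le_compat; lra. }
      simpl T.
      assert (E : A * (rho ^ S (S (2 * K))) / ((2 * INR K + 1 + 1) * ((2 * INR K + 1) * INR (fact (2 * K)))) *
          Rabs ((x + o) * (x - o) * P) =
          (A * rho ^ (2 * K) / INR (fact (2 * K)) * Rabs P) *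
          (rho ^ 2 * (Rabs (x + o) * Rabs (x - o)) / ((2 * INR K + 1) * (2 * INR K + 2)))).
      { rewrite !Rabs_mult. simpl. pose proof (pos_INR K). field. simpl in Hf. split; [lra|]. split; lra. }
      replace (2 * INR K + 1 + 1) with (2 * INR K + 1 + 1) by reflexivity.
      rewrite E. apply Rmult_le_compat.
      + apply Rmult_le_pos. apply Rdiv_le_0_compat. apply Rmult_le_pos. exact HA.
        apply pow_le; lra. exact Hf. apply Rabs_pos.
      + apply Rdiv_le_0_compat. apply Rmult_le_pos. apply pow2_ge_0.
        apply Rmult_le_pos; apply Rabs_pos. pose proof (pos_INR K). nra.
      + exact IH.
      + unfold fac. unfold Rdiv. apply Rmult_le_compat_r.
        pose proof (pos_INR K). left. apply Rinv_0_lt_compat. nra.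
        apply Rmult_le_compat_l. apply pow2_ge_0. exact Hxo. }
  set (r := rho * delta / 2).
  assert (Hr0 : 0 < r) by (unfold r; nra). assert (Hrd : rho * delta = 2 * r) by (unfold r; field). clearbody r.
  set (kap := (1 + / r) / 2).
  assert (Hkr : r * kap < 1).
  { unfold kap. replace (r * ((1 + / r) / 2)) with ((r + 1) / 2) by (field; lra). lra. }
  assert (Hk1 : 1 < kap).
  { unfold kap. assert (1 < / r). { rewrite <- Rinv_1. apply Rinv_lt_contravar; lra. } lra. }
  set (s := (r * kap) ^ 2).
  assert (Hs0 : 0 <= s) by (unfold s; apply pow2_ge_0).
  assert (Hs1 : s < 1).
  { unfold s. assert (0 < r * kap) by nra. simpl. nra. }
  destruct (INR_unbounded (M / (kap - 1) + 1)) as [N2 HN2].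
  set (K2 := Nat.max 1 N2).
  assert (Hfacs : forall K, (K2 <= K)%nat -> fac K <= s).
  { intros K HK. assert (HK1 : 1 <= INR K).
    { change 1 with (INR 1). apply le_INR. unfold K2 in HK. lia. }
    assert (HKN : INR N2 <= INR K) by (apply le_INR; unfold K2 in HK; lia).
    assert (HKM : M <= (kap - 1) * INR K).
    { assert (M / (kap - 1) <= INR K) by lra.
      apply (Rmult_le_compat_l (kap - 1)) in H; [|lra].
      replace ((kap - 1) * (M / (kap - 1))) with M in H by (field; lra). lra. }
    unfold fac. apply (Rmult_le_reg_r ((2 * INR K + 1) * (2 * INR K + 2))). nra.
    replace (rho ^ 2 * ((INR K + M) * delta) ^ 2 / ((2 * INR K + 1) * (2 * INR K + 2)) *
      ((2 * INR K + 1) * (2 * INR K + 2))) with (4 * r ^ 2 * (INR K + M) ^ 2).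
    2: { replace (rho ^ 2 * ((INR K + M) * delta) ^ 2) with ((rho*delta)^2 * (INR K + M)^2) by ring. rewrite Hrd. field. nra. }
    assert (HKk : (INR K + M) ^ 2 <= (kap * INR K) ^ 2).
    { apply pow_incr. lra. }
    unfold s. 
    apply Rle_trans with (4 * r ^ 2 * (kap * INR K) ^ 2).
    apply Rmult_le_compat_l. nra. exact HKk.
    replace (4 * r ^ 2 * (kap * INR K) ^ 2) with ((r * kap) ^ 2 * (4 * INR K ^ 2)) by ring.
    apply Rmult_le_compat_l. apply pow2_ge_0. nra. }
  assert (HTd : forall n, T (K2 + n)%nat <= T K2 * s ^ n).
  { induction n as [|n IH]. rewrite Nat.add_0_r. simpl. lra.
    rewrite Nat.add_succ_r. simpl T. fold T.
    apply Rle_trans with (T (K2 + n)%nat * s).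
    apply Rmult_le_compat_l. apply HT0. apply Hfacs. lia.
    simpl. replace (T K2 * (s * s ^ n)) with (T K2 * s ^ n * s) by ring.
    apply Rmult_le_compat_r; assumption. }
  destruct (Req_dec (F 0%nat x) 0) as [Hz|Hnz]; [exact Hz|exfalso].
  assert (Hpos : 0 < Rabs (F 0%nat x)) by (apply Rabs_pos_lt; exact Hnz).
  destruct (pow_lt_1_zero s ltac:(rewrite Rabs_right; lra) (Rabs (F 0%nat x) / (T K2 + 1)))
    as [N HN].
  { apply Rdiv_lt_0_compat. exact Hpos. pose proof (HT0 K2). lra. }
  specialize (HN N (le_n N)). rewrite Rabs_right in HN by (apply Rle_ge, pow_le; lra).
  pose proof (Hint (K2 + N)%nat) as H1. pose proof (HTb (K2 + N)%nat) as H2.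
  pose proof (HTd N) as H3. pose proof (HT0 K2) as H4.
  assert (H5 : T K2 * s ^ N <= T K2 * (Rabs (F 0%nat x) / (T K2 + 1))).
  { apply Rmult_le_compat_l. exact H4. lra. }
  assert (H6 : T K2 * (Rabs (F 0%nat x) / (T K2 + 1)) < Rabs (F 0%nat x)).
  { apply (Rmult_lt_reg_r (T K2 + 1)). lra.
    replace (T K2 * (Rabs (F 0%nat x) / (T K2 + 1)) * (T K2 + 1)) with (T K2 * Rabs (F 0%nat x)) by (field; lra).
    nra. }
  lra.
Qed.


Lemma RInt_minus' (f g : R -> R) a b : ex_RInt f a b -> ex_RInt g a b ->
  RInt (fun t => f t - g t) a b = RInt f a b - RInt g a b.
Proof. intros H1 H2. exact (RInt_minus f g a b H1 H2). Qed.
Lemma RInt_plus' (f g : R -> R) a b : ex_RInt f a b -> ex_RInt g a b ->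
  RInt (fun t => f t + g t) a b = RInt f a b + RInt g a b.
Proof. intros H1 H2. exact (RInt_plus f g a b H1 H2). Qed.
Lemma RInt_scal' (k : R) (f : R -> R) a b : ex_RInt f a b ->
  RInt (fun t => k * f t) a b = k * RInt f a b.
Proof. intros H. exact (RInt_scal f a b k H). Qed.
Lemma RInt_const' (k a b : R) : RInt (fun _ => k) a b = (b - a) * k.
Proof. exact (RInt_const a b k). Qed.

Lemma RInt_ext' (f g : R -> R) a b : (forall x, f x = g x) -> RInt f a b = RInt g a b.
Proof. intros H. apply RInt_ext. intros; apply H. Qed.

Definition lphi (t0 D : R) (n : nat) (t : R) : R := (1 - ((t - t0) / D) ^ 2) ^ n.

Lemma lphi_cpt t0 D n t : D <> 0 -> continuity_pt (lphi t0 D n) t.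
Proof.
  intros HD. unfold lphi. apply cpt_pow. apply cpt_minus. apply cpt_const.
  apply cpt_pow. unfold Rdiv. apply cpt_mult. apply cpt_minus. apply cpt_id. apply cpt_const. apply cpt_const.
Qed.

Ltac cptl := repeat first [ apply cpt_plus | apply cpt_minus | apply cpt_mult | apply cpt_opp
   | apply cpt_pow | apply cpt_cos | apply cpt_sin | apply cpt_id | apply cpt_const | (apply lphi_cpt; assumption) | assumption | auto ].

Lemma landau_moments (g : R -> R) a b c t0 D : D <> 0 -> (forall t, continuity_pt g t) ->
  (forall n, RInt (fun t => (t - c) ^ n * g t) a b = 0) ->
  forall n j, RInt (fun t => (t - c) ^ j * (lphi t0 D n t * g t)) a b = 0.
Proof.
  intros HD Hg Hm n. induction n as [|n IH]; intros j.
  - rewrite <- (Hm j). apply RInt_ext'. intros x. unfold lphi. simpl. ring.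
  - set (e := c - t0).
    set (h := fun k t => (t - c) ^ k * (lphi t0 D n t * g t)).
    assert (Hex : forall k, ex_RInt (h k) a b).
    { intros k. apply exRInt_cpt. intros t. unfold h. cptl. }
    transitivity (RInt (fun t => h j t - / D ^ 2 * (h (S (S j)) t + (2 * e * h (S j) t + e ^ 2 * h j t))) a b).
    + apply RInt_ext'. intros t. unfold h, lphi, e. simpl. field. exact HD.
    + assert (X1 : ex_RInt (fun t => 2 * e * h (S j) t) a b) by (apply exRInt_cpt; intros t; unfold h; cptl).
      assert (X2 : ex_RInt (fun t => e ^ 2 * h j t) a b) by (apply exRInt_cpt; intros t; unfold h; cptl).
      assert (X3 : ex_RInt (fun t => 2 * e * h (S j) t + e ^ 2 * h j t) a b) by (apply exRInt_cpt; intros t; unfold h; cptl).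
      assert (X4 : ex_RInt (fun t => h (S (S j)) t + (2 * e * h (S j) t + e ^ 2 * h j t)) a b).
      { apply exRInt_cpt; intros t; unfold h. cptl. }
      assert (X5 : ex_RInt (fun t => / D ^ 2 * (h (S (S j)) t + (2 * e * h (S j) t + e ^ 2 * h j t))) a b).
      { apply (ex_RInt_scal (V := R_CompleteNormedModule)). exact X4. }
      rewrite (RInt_minus' _ _ a b (Hex j) X5).
      rewrite (RInt_scal' _ _ a b X4).
      rewrite (RInt_plus' _ _ a b (Hex (S (S j))) X3).
      rewrite (RInt_plus' _ _ a b X1 X2).
      rewrite (RInt_scal' _ _ a b (Hex (S j))).
      rewrite (RInt_scal' _ _ a b (Hex j)).
      unfold h. rewrite !IH. change (0 - / D ^ 2 * (0 + (2 * e * 0 + e ^ 2 * 0)) = (0:R)). ring.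
Qed.

Lemma cont_near (g : R -> R) x0 eps : continuity_pt g x0 -> 0 < eps ->
  exists eta, 0 < eta /\ forall x, Rabs (x - x0) < eta -> Rabs (g x - g x0) < eps.
Proof.
  intros H He. destruct (H eps He) as [alp [Halp H']]. exists alp. split. exact Halp.
  intros x Hx. destruct (Req_dec x x0) as [->|Hne].
  - rewrite Rminus_eq_0, Rabs_R0. exact He.
  - apply H'. split. split. exact I. auto. exact Hx.
Qed.

Lemma landau_pos (g : R -> R) a b t0 : a < b -> (forall t, continuity_pt g t) ->
  (forall n, RInt (fun t => lphi t0 (2 * (b - a)) n t * g t) a b = 0) ->
  a <= t0 <= b -> ~ (0 < g t0).
Proof.
  intros Hab Hg Hm Ht0 Hpos.
  set (gam := g t0).
  destruct (cont_near g t0 (gam / 2) (Hg t0)) as [eta0 [Heta0 Hnear]]. unfold gam; lra.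
  set (eta := Rmin eta0 (b - a)).
  assert (He1 : 0 < eta) by (unfold eta; apply Rmin_pos; lra).
  assert (He2 : eta <= eta0) by apply Rmin_l.
  assert (He3 : eta <= b - a) by apply Rmin_r.
  set (D := 2 * (b - a)).
  set (al := Rmax a (t0 - eta / 2)). set (be := Rmin b (t0 + eta / 2)).
  assert (Hal : a <= al /\ t0 - eta / 2 <= al) by (split; [apply Rmax_l| apply Rmax_r]).
  assert (Hbe : be <= b /\ be <= t0 + eta / 2) by (split; [apply Rmin_l| apply Rmin_r]).
  assert (Hab2 : eta / 2 <= be - al).
  { unfold al, be, Rmax, Rmin. destruct (Rle_dec a (t0 - eta / 2)); destruct (Rle_dec b (t0 + eta / 2)); lra. }
  destruct (continuity_ab_maj (fun t => Rabs (g t)) a b) as [Cx [HCx HCx2]]. lra.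
  { intros c _. apply continuity_pt_comp with (f1 := g) (f2 := Rabs). apply Hg. apply Rcontinuity_abs. }
  set (Mg := Rabs (g Cx)).
  assert (HMg : gam <= Mg).
  { unfold Mg, gam. pose proof (HCx t0 Ht0). simpl in H. rewrite (Rabs_right (g t0)) in H; lra. }
  set (q1 := 1 - (eta / (2 * D)) ^ 2). set (q2 := 1 - (eta / D) ^ 2).
  assert (HD : 0 < D) by (unfold D; lra).
  assert (Hq1 : q1 <= 1) by (unfold q1; pose proof (pow2_ge_0 (eta / (2 * D))); lra).
  assert (Hq2 : 0 < q2).
  { unfold q2. assert (eta / D <= 1 / 2).
    { unfold D. apply (Rmult_le_reg_r (2 * (b - a))). lra. field_simplify; lra. }
    assert (0 <= eta / D) by (apply Rdiv_le_0_compat; lra). simpl. nra. }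
  assert (Hq12 : q2 < q1).
  { unfold q1, q2. assert (0 < eta / (2 * D)) by (apply Rdiv_lt_0_compat; lra).
    replace (eta / D) with (2 * (eta / (2 * D))) by (field; lra). simpl. nra. }
  assert (Hpsi : forall t, a <= t <= b -> 0 <= 1 - ((t - t0) / D) ^ 2).
  { intros t Ht. assert (Rabs ((t - t0) / D) <= 1 / 2).
    { unfold Rdiv. rewrite Rabs_mult, Rabs_inv, (Rabs_right D) by lra.
      apply (Rmult_le_reg_r D). lra. field_simplify. 2: lra. unfold D.
      apply Rabs_le. lra. }
    rewrite <- Rsqr_pow2. rewrite Rsqr_abs. pose proof (Rabs_pos ((t - t0) / D)).
    unfold Rsqr. nra. }
  assert (P1 : forall n t, a <= t <= b -> - Mg * q2 ^ n <= lphi t0 D n t * g t).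
  { intros n t Ht. unfold lphi.
    assert (Hq2n : 0 <= q2 ^ n) by (apply pow_le; lra).
    assert (HMn : 0 <= Mg) by (unfold Mg; apply Rabs_pos).
    pose proof (Hpsi t Ht) as Hp.
    destruct (Rlt_le_dec (Rabs (t - t0)) eta) as [Hc|Hc].
    - assert (0 < g t).
      { pose proof (Hnear t ltac:(lra)). apply Rabs_def2 in H. unfold gam in *. lra. }
      assert (0 <= (1 - ((t - t0) / D) ^ 2) ^ n) by (apply pow_le; exact Hp).
      nra.
    - assert (Hle : (1 - ((t - t0) / D) ^ 2) ^ n <= q2 ^ n).
      { apply pow_incr. split. exact Hp. unfold q2.
        assert ((eta / D) ^ 2 <= ((t - t0) / D) ^ 2).
        { rewrite <- !Rsqr_pow2. rewrite (Rsqr_abs ((t - t0) / D)). apply Rsqr_incr_1.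
          unfold Rdiv. rewrite Rabs_mult, Rabs_inv, (Rabs_right D) by lra.
          apply Rmult_le_compat_r. left; apply Rinv_0_lt_compat; lra. exact Hc.
          apply Rdiv_le_0_compat; lra. apply Rabs_pos. }
        lra. }
      assert (0 <= (1 - ((t - t0) / D) ^ 2) ^ n) by (apply pow_le; exact Hp).
      pose proof (HCx t Ht). simpl in H0. fold Mg in H0.
      assert (Rabs (g t) * (1 - ((t - t0) / D) ^ 2) ^ n <= Mg * q2 ^ n).
      { apply Rmult_le_compat; auto. apply Rabs_pos. }
      pose proof (Rle_abs (- g t)). rewrite Rabs_Ropp in H2. nra. }
  assert (P2 : forall n t, al <= t <= be -> gam / 2 * q1 ^ n <= lphi t0 D n t * g t).
  { intros n t Ht. unfold lphi.
    assert (Ht' : a <= t <= b) by lra.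
    assert (Hc : Rabs (t - t0) <= eta / 2) by (apply Rabs_le; lra).
    assert (gam / 2 <= g t).
    { pose proof (Hnear t ltac:(lra)). apply Rabs_def2 in H. unfold gam in *. lra. }
    assert (Hle : q1 ^ n <= (1 - ((t - t0) / D) ^ 2) ^ n).
    { apply pow_incr. split.
      - unfold q1. assert (eta / (2 * D) <= 1 / 2).
        { apply (Rmult_le_reg_r (2 * D)). lra. field_simplify; unfold D; lra. }
        assert (0 <= eta / (2 * D)) by (apply Rdiv_le_0_compat; lra). simpl. nra.
      - unfold q1. assert (((t - t0) / D) ^ 2 <= (eta / (2 * D)) ^ 2).
        { rewrite <- !Rsqr_pow2. rewrite (Rsqr_abs ((t - t0) / D)). apply Rsqr_incr_1.
          unfold Rdiv. rewrite Rabs_mult, Rabs_inv, (Rabs_right D) by lra.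
          apply (Rmult_le_reg_r D). lra. field_simplify; lra.
          apply Rabs_pos. apply Rdiv_le_0_compat; lra. }
        lra. }
    assert (0 <= q1 ^ n) by (apply pow_le; lra).
    apply Rle_trans with (g t * q1 ^ n). apply Rmult_le_compat_r; lra.
    rewrite (Rmult_comm _ (g t)). apply Rmult_le_compat_l. unfold gam in *; lra. exact Hle. }
  assert (Hex : forall n x y, ex_RInt (fun t => lphi t0 D n t * g t) x y).
  { intros n x y. apply exRInt_cpt. intros t. apply cpt_mult. apply lphi_cpt; lra. auto. }
  assert (Hineq : forall n, gam / 2 * q1 ^ n * (eta / 2) <= Mg * q2 ^ n * (b - a)).
  { intros n. specialize (Hm n). fold D in Hm.
    rewrite <- (RInt_Chasles (V := R_CompleteNormedModule) _ a be b) in Hm by apply Hex.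
    rewrite <- (RInt_Chasles (V := R_CompleteNormedModule) _ a al be) in Hm by apply Hex.
    assert (I1 : RInt (fun _ => - Mg * q2 ^ n) a al <= RInt (fun t => lphi t0 D n t * g t) a al).
    { apply RInt_le. lra. apply exRInt_cpt; intros; apply cpt_const. apply Hex.
      intros t Ht. apply P1. lra. }
    assert (I2 : RInt (fun _ => gam / 2 * q1 ^ n) al be <= RInt (fun t => lphi t0 D n t * g t) al be).
    { apply RInt_le. lra. apply exRInt_cpt; intros; apply cpt_const. apply Hex.
      intros t Ht. apply P2. lra. }
    assert (I3 : RInt (fun _ => - Mg * q2 ^ n) be b <= RInt (fun t => lphi t0 D n t * g t) be b).
    { apply RInt_le. lra. apply exRInt_cpt; intros; apply cpt_const. apply Hex.
      intros t Ht. apply P1. lra. }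
    rewrite !RInt_const' in I1, I2, I3.
    change (RInt (fun t => lphi t0 D n t * g t) a al + RInt (fun t => lphi t0 D n t * g t) al be
            + RInt (fun t => lphi t0 D n t * g t) be b = 0) in Hm.
    assert (0 <= Mg * q2 ^ n) by (apply Rmult_le_pos; [unfold Mg; apply Rabs_pos| apply pow_le; lra]).
    assert (0 <= gam / 2 * q1 ^ n) by (apply Rmult_le_pos; [unfold gam in *; lra| apply pow_le; lra]).
    assert (eta / 2 * (gam / 2 * q1 ^ n) <= (be - al) * (gam / 2 * q1 ^ n)) by (apply Rmult_le_compat_r; lra).
    assert ((al - a + (b - be)) * (Mg * q2 ^ n) <= (b - a) * (Mg * q2 ^ n)) by (apply Rmult_le_compat_r; lra).
    lra. }
  set (s := q2 / q1).
  assert (Hs : 0 <= s < 1).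
  { unfold s. split. apply Rdiv_le_0_compat; lra. apply (Rmult_lt_reg_r q1). lra.
    replace (q2 / q1 * q1) with q2 by (field; lra). lra. }
  set (y := gam * eta / (4 * Mg * (b - a))).
  assert (Hy : 0 < y) by (unfold y; apply Rdiv_lt_0_compat; [apply Rmult_lt_0_compat; unfold gam in *; lra| apply Rmult_lt_0_compat; [unfold gam in *; lra| lra]]).
  destruct (pow_lt_1_zero s ltac:(rewrite Rabs_right; lra) y Hy) as [N HN].
  specialize (HN N (le_n N)). rewrite Rabs_right in HN by (apply Rle_ge, pow_le; lra).
  specialize (Hineq N).
  assert (Hq1n : 0 < q1 ^ N) by (apply pow_lt; lra).
  assert (Es : s ^ N = q2 ^ N / q1 ^ N) by (unfold s, Rdiv; rewrite Rpow_mult_distr, pow_inv; reflexivity).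
  rewrite Es in HN. unfold y in HN.
  assert (HMgp : 0 < Mg) by (unfold gam in *; lra).
  assert (HP : 0 < q1 ^ N * (4 * Mg * (b - a))).
  { apply Rmult_lt_0_compat. exact Hq1n. apply Rmult_lt_0_compat; lra. }
  apply (Rmult_lt_compat_r (q1 ^ N * (4 * Mg * (b - a)))) in HN; [|exact HP].
  replace (q2 ^ N / q1 ^ N * (q1 ^ N * (4 * Mg * (b - a)))) with (4 * (Mg * q2 ^ N * (b - a))) in HN by (field; lra).
  replace (gam * eta / (4 * Mg * (b - a)) * (q1 ^ N * (4 * Mg * (b - a)))) with (4 * (gam / 2 * q1 ^ N * (eta / 2))) in HN by (field; split; lra).
  lra.
Qed.

Lemma moments_zero (g : R -> R) a b c : a < b -> (forall t, continuity_pt g t) ->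
  (forall n, RInt (fun t => (t - c) ^ n * g t) a b = 0) ->
  forall t0, a <= t0 <= b -> g t0 = 0.
Proof.
  intros Hab Hg Hm t0 Ht0.
  assert (HD : 2 * (b - a) <> 0) by lra.
  assert (Hpos : forall h : R -> R, (forall t, continuity_pt h t) ->
     (forall n, RInt (fun t => (t - c) ^ n * h t) a b = 0) -> ~ (0 < h t0)).
  { intros h Hh Hmh. apply (landau_pos h a b t0 Hab Hh); auto.
    intros n. rewrite <- (landau_moments h a b c t0 (2 * (b - a)) HD Hh Hmh n 0).
    apply RInt_ext'. intros x. simpl. ring. }
  pose proof (Hpos g Hg Hm) as H1.
  assert (H2 : ~ (0 < - g t0)).
  { apply (Hpos (fun t => - g t)). intros t. apply cpt_opp. auto.
    intros n. transitivity (RInt (fun t => (-1) * ((t - c) ^ n * g t)) a b).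
    apply RInt_ext'. intros; ring.
    rewrite RInt_scal'. rewrite Hm. rewrite Rmult_0_r. reflexivity.
    apply exRInt_cpt. intros t. apply cpt_mult. cpt. auto. }
  lra.
Qed.


Lemma rot_parity (p : (R -> R) * (R -> R)) : forall k,
  (forall t, fst (rot (2 * k) p) t = (-1) ^ k * fst p t) /\
  (forall t, snd (rot (2 * k) p) t = (-1) ^ k * snd p t).
Proof.
  induction k as [|k [IH1 IH2]].
  - simpl. split; intros; ring.
  - replace (2 * S k)%nat with (S (S (2 * k))) by lia. simpl rot. simpl fst. simpl snd.
    split; intros t.
    + rewrite IH1. simpl. ring.
    + rewrite IH2. simpl. ring.
Qed.

Lemma rot_odd (p : (R -> R) * (R -> R)) k t : fst (rot (S (2 * k)) p) t = (-1) ^ k * snd p t.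
Proof. simpl rot. simpl fst. apply rot_parity. Qed.

Lemma Fam_all_zero a b c p : (forall t, continuity_pt (fst p) t) -> (forall t, continuity_pt (snd p) t) ->
  (forall x, Fam a b c p 0 x = 0) -> forall n x, Fam a b c p n x = 0.
Proof.
  intros H1 H2 H0 n. induction n as [|n IH]; intros x. apply H0.
  rewrite <- (is_derive_unique _ _ _ (Fam_derivs a b c p H1 H2 n x)).
  replace (Fam a b c p n) with (fun _ : R => 0). apply Derive_const.
  apply functional_extensionality. intros; symmetry; apply IH.
Qed.

Lemma Fam_at0 a b c p n : Fam a b c p n 0 = RInt (fun t => (t - c) ^ n * fst (rot n p) t) a b.
Proof.
  unfold Fam, Phi. apply RInt_ext'. intros t. unfold kern.
  rewrite Rmult_0_l, cos_0, sin_0. ring.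
Qed.

Lemma moment_scale (h : R -> R) a b c n s : s <> 0 -> (forall t, continuity_pt h t) ->
  RInt (fun t => (t - c) ^ n * (s * h t)) a b = 0 -> RInt (fun t => (t - c) ^ n * h t) a b = 0.
Proof.
  intros Hs Hh H.
  assert (E : RInt (fun t => (t - c) ^ n * (s * h t)) a b = s * RInt (fun t => (t - c) ^ n * h t) a b).
  { rewrite <- RInt_scal'. apply RInt_ext'. intros; ring.
    apply exRInt_cpt. intros t. apply cpt_mult. cpt. auto. }
  rewrite E in H. apply Rmult_integral in H. destruct H as [H|H]. contradiction. exact H.
Qed.

Lemma Phi0_eq1 a b c u v w : (forall t, continuity_pt u t) -> (forall t, continuity_pt v t) ->
  Phi a b c 0 u v w = cos (w * c) * RInt (fun t => u t * cos (w * t) + v t * sin (w * t)) a b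
                    - sin (w * c) * RInt (fun t => v t * cos (w * t) - u t * sin (w * t)) a b.
Proof.
  intros Hu Hv. unfold Phi.
  rewrite <- !RInt_scal', <- RInt_minus'.
  - apply RInt_ext'. intros t. unfold kern. rewrite Rmult_minus_distr_l.
    rewrite cos_minus, sin_minus. simpl. ring.
  - apply exRInt_cpt. intros t. cpt.
  - apply exRInt_cpt. intros t. cpt.
  - apply exRInt_cpt. intros t. cpt.
  - apply exRInt_cpt. intros t. cpt.
Qed.

Lemma Phi0_eq2 a b c u v w : (forall t, continuity_pt u t) -> (forall t, continuity_pt v t) ->
  Phi a b c 0 v (fun t => - u t) w = cos (w * c) * RInt (fun t => v t * cos (w * t) - u t * sin (w * t)) a b
                    + sin (w * c) * RInt (fun t => u t * cos (w * t) + v t * sin (w * t)) a b.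
Proof.
  intros Hu Hv. unfold Phi.
  rewrite <- !RInt_scal', <- RInt_plus'.
  - apply RInt_ext'. intros t. unfold kern. rewrite Rmult_minus_distr_l.
    rewrite cos_minus, sin_minus. simpl. ring.
  - apply exRInt_cpt. intros t. cpt.
  - apply exRInt_cpt. intros t. cpt.
  - apply exRInt_cpt. intros t. cpt.
  - apply exRInt_cpt. intros t. cpt.
Qed.

Lemma core (u v : R -> R) (a b delta mu : R) (om : nat -> R) (m : nat) :
  a < b -> (forall t, continuity_pt u t) -> (forall t, continuity_pt v t) ->
  0 < delta -> (b - a) * delta / 4 < 1 -> 0 <= mu ->
  (forall k l, (k < l)%nat -> om k < om l) ->
  (forall k, (INR k - 1) * delta < om k) ->
  (forall k, om k <= INR k * delta + mu) ->
  (forall k w, k <> m -> (w = om k \/ w = - om k) ->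
     RInt (fun t => u t * cos (w * t) + v t * sin (w * t)) a b = 0 /\
     RInt (fun t => v t * cos (w * t) - u t * sin (w * t)) a b = 0) ->
  forall t, a <= t <= b -> u t = 0 /\ v t = 0.
Proof.
  intros Hab Hu Hv Hdel Hr Hmu Hlt Hlo Hhi Hz.
  set (c := (a + b) / 2). set (rho := (b - a) / 2).
  destruct (continuity_ab_maj (fun t => Rabs (u t) + Rabs (v t)) a b) as [Cx [HCx _]]. lra.
  { intros t _. apply cpt_plus; apply continuity_pt_comp with (f2 := Rabs); auto; apply Rcontinuity_abs. }
  set (Mb := Rabs (u Cx) + Rabs (v Cx)).
  assert (HMb0 : 0 <= Mb) by (unfold Mb; pose proof (Rabs_pos (u Cx)); pose proof (Rabs_pos (v Cx)); lra).
  assert (Hb : forall t, a <= t <= b -> Rabs (t - c) <= rho /\ Rabs (u t) <= Mb /\ Rabs (v t) <= Mb).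
  { intros t Ht. pose proof (HCx t Ht). simpl in H. fold Mb in H.
    pose proof (Rabs_pos (u t)). pose proof (Rabs_pos (v t)).
    split. apply Rabs_le. unfold c, rho. lra. split; lra. }
  assert (Hnu : forall t, continuity_pt (fun s => - u s) t) by (intros; apply cpt_opp; auto).
  assert (Hfam : forall p, (forall t, continuity_pt (fst p) t) -> (forall t, continuity_pt (snd p) t) ->
            (forall t, a <= t <= b -> Rabs (t - c) <= rho /\ Rabs (fst p t) <= Mb /\ Rabs (snd p t) <= Mb) ->
            (forall k, k <> m -> Fam a b c p 0 (om k) = 0 /\ Fam a b c p 0 (- om k) = 0) ->
            forall n x, Fam a b c p n x = 0).
  { intros p H1 H2 H3 H4. apply Fam_all_zero; auto.
    apply (zero_everywhere (Fam a b c p) ((b - a) * (2 * Mb)) rho delta mu om m).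
    - apply Fam_derivs; auto.
    - apply Fam_bound; auto. lra.
    - apply Rmult_le_pos; lra.
    - unfold rho; lra.
    - exact Hdel.
    - unfold rho. lra.
    - exact Hmu.
    - exact Hlt.
    - exact Hlo.
    - exact Hhi.
    - exact H4. }
  assert (Z1 : forall n x, Fam a b c (u, v) n x = 0).
  { apply Hfam; auto. intros k Hk. unfold Fam; simpl.
    rewrite !Phi0_eq1 by auto.
    destruct (Hz k (om k) Hk (or_introl eq_refl)) as [A1 A2].
    destruct (Hz k (- om k) Hk (or_intror eq_refl)) as [B1 B2].
    rewrite A1, A2, B1, B2. split; ring. }
  assert (Z2 : forall n x, Fam a b c (v, fun s => - u s) n x = 0).
  { apply Hfam; auto. simpl. intros t Ht. destruct (Hb t Ht) as [X [Y W]]. rewrite Rabs_Ropp. auto.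
    intros k Hk. unfold Fam; simpl.
    rewrite !Phi0_eq2 by auto.
    destruct (Hz k (om k) Hk (or_introl eq_refl)) as [A1 A2].
    destruct (Hz k (- om k) Hk (or_intror eq_refl)) as [B1 B2].
    rewrite A1, A2, B1, B2. split; ring. }
  assert (Mu : forall n, RInt (fun t => (t - c) ^ n * u t) a b = 0).
  { intros n. destruct (Nat.Even_or_Odd n) as [[k ->]|[k ->]].
    - apply (moment_scale u a b c _ ((-1) ^ k)). apply pow_nonzero; lra. auto.
      rewrite <- (Z1 (2 * k)%nat 0), Fam_at0. apply RInt_ext'. intros t.
      destruct (rot_parity (u, v) k) as [P _]. rewrite P. reflexivity.
    - replace (2 * k + 1)%nat with (S (2 * k)) by lia.
      apply (moment_scale u a b c _ (- (-1) ^ k)). apply Ropp_neq_0_compat, pow_nonzero; lra. auto.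
      rewrite <- (Z2 (S (2 * k)) 0), Fam_at0. apply RInt_ext'. intros t.
      rewrite rot_odd. simpl. ring. }
  assert (Mv : forall n, RInt (fun t => (t - c) ^ n * v t) a b = 0).
  { intros n. destruct (Nat.Even_or_Odd n) as [[k ->]|[k ->]].
    - apply (moment_scale v a b c _ ((-1) ^ k)). apply pow_nonzero; lra. auto.
      rewrite <- (Z2 (2 * k)%nat 0), Fam_at0. apply RInt_ext'. intros t.
      destruct (rot_parity (v, fun s => - u s) k) as [P _]. rewrite P. reflexivity.
    - replace (2 * k + 1)%nat with (S (2 * k)) by lia.
      apply (moment_scale v a b c _ ((-1) ^ k)). apply pow_nonzero; lra. auto.
      rewrite <- (Z1 (S (2 * k)) 0), Fam_at0. apply RInt_ext'. intros t.
      rewrite rot_odd. simpl. ring. }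
  intros t Ht. split.
  - apply (moments_zero u a b c Hab Hu Mu t Ht).
  - apply (moments_zero v a b c Hab Hv Mv t Ht).
Qed.


Lemma int_between (z : Z) (p : nat) (lo hi : R) :
  INR p - 1 < IZR z -> IZR z < INR p -> False.
Proof.
  intros H1 H2. rewrite INR_IZR_INZ in H1, H2.
  apply lt_IZR in H2. replace (IZR (Z.of_nat p) - 1) with (IZR (Z.of_nat p - 1)) in H1
    by (rewrite minus_IZR; reflexivity).
  apply lt_IZR in H1. lia.
Qed.


Lemma q_bounds (S c : R) (q : nat -> R) (HS : 0 < S) (Hq : is_q S c q) k : (1 <= k)%nat -> (INR k - 1) * (PI / (2 * S)) < q k < INR k * (PI / (2 * S)).
Proof.
  intros Hk. destruct Hq as [Hq0 [Hev Hod]].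
  destruct (Nat.Even_or_Odd k) as [[p ->]|[p ->]].
  - destruct (Hev p ltac:(lia)) as [[A B] _].
    rewrite mult_INR. change (INR 2) with 2.
    split.
    + replace ((2 * INR p - 1) * (PI / (2 * S))) with ((INR p - 1 / 2) * PI / S) by (field; lra). exact A.
    + replace (2 * INR p * (PI / (2 * S))) with (INR p * PI / S) by (field; lra). exact B.
  - destruct (Hod (Datatypes.S p) ltac:(lia)) as [[A B] _].
    replace (2 * Datatypes.S p - 1)%nat with (2 * p + 1)%nat in A, B by lia.
    rewrite plus_INR, mult_INR. change (INR 2) with 2. change (INR 1) with 1. rewrite S_INR in A, B.
    split.
    + replace ((2 * INR p + 1 - 1) * (PI / (2 * S))) with ((INR p + 1 - 1) * PI / S) by (field; lra). exact A.
    + replace ((2 * INR p + 1) * (PI / (2 * S))) with ((INR p + 1 - 1 / 2) * PI / S) by (field; lra). exact B.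
Qed.

Lemma chi_S_nonzero (S c : R) (q : nat -> R) (HS : 0 < S) (Hq : is_q S c q) k : chi q k S <> 0.
Proof.
  destruct Hq as [Hq0 [Hev Hod]]. unfold chi. pose proof PI_RGT_0 as HPI.
  destruct (Nat.Even_or_Odd k) as [[p ->]|[p ->]].
  - rewrite Nat.even_even. destruct p as [|p].
    + simpl. rewrite Hq0, Rmult_0_l, cos_0. lra.
    + destruct (Hev (Datatypes.S p) ltac:(lia)) as [[A B] _].
      intros Hc. apply cos_eq_0_0 in Hc. destruct Hc as [z Hz].
      assert (A' : (INR (Datatypes.S p) - 1 / 2) * PI < q (2 * Datatypes.S p)%nat * S).
      { apply (Rmult_lt_compat_r S) in A; [|lra]. replace ((INR (Datatypes.S p) - 1 / 2) * PI / S * S) with ((INR (Datatypes.S p) - 1 / 2) * PI) in A by (field; lra). exact A. }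
      assert (B' : q (2 * Datatypes.S p)%nat * S < INR (Datatypes.S p) * PI).
      { apply (Rmult_lt_compat_r S) in B; [|lra]. replace (INR (Datatypes.S p) * PI / S * S) with (INR (Datatypes.S p) * PI) in B by (field; lra). exact B. }
      rewrite Hz in A', B'.
      apply (int_between z (Datatypes.S p) 0 0).
      * apply (Rmult_lt_reg_r PI). lra. nra.
      * apply (Rmult_lt_reg_r PI). lra. nra.
  - rewrite Nat.even_odd.
    destruct (Hod (Datatypes.S p) ltac:(lia)) as [[A B] _].
    replace (2 * Datatypes.S p - 1)%nat with (2 * p + 1)%nat in A, B by lia.
    intros Hc. apply sin_eq_0_0 in Hc. destruct Hc as [z Hz].
    assert (A' : (INR (Datatypes.S p) - 1) * PI < q (2 * p + 1)%nat * S).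
    { apply (Rmult_lt_compat_r S) in A; [|lra]. replace ((INR (Datatypes.S p) - 1) * PI / S * S) with ((INR (Datatypes.S p) - 1) * PI) in A by (field; lra). exact A. }
    assert (B' : q (2 * p + 1)%nat * S < (INR (Datatypes.S p) - 1 / 2) * PI).
    { apply (Rmult_lt_compat_r S) in B; [|lra]. replace ((INR (Datatypes.S p) - 1 / 2) * PI / S * S) with ((INR (Datatypes.S p) - 1 / 2) * PI) in B by (field; lra). exact B. }
    rewrite Hz in A', B'.
    apply (int_between z (Datatypes.S p) 0 0).
    * apply (Rmult_lt_reg_r PI). lra. nra.
    * apply (Rmult_lt_reg_r PI). lra. nra.
Qed.


Lemma sum_single (j : nat) (x : R) n :
  sum_n (fun k => if Nat.eqb k j then x else 0) n = if Nat.leb j n then x else 0.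
Proof.
  induction n as [|n IH].
  - rewrite sum_O. destruct j; reflexivity.
  - rewrite sum_Sn, IH.
    destruct (Nat.eqb_spec (S n) j); destruct (Nat.leb_spec j n); destruct (Nat.leb_spec j (S n)); try lia;
    unfold plus; simpl; lra.
Qed.

Lemma Series_single (j : nat) (x : R) : Series (fun k => if Nat.eqb k j then x else 0) = x.
Proof.
  apply is_series_unique. unfold is_series.
  apply (filterlim_ext_loc (fun _ => x)).
  - exists j. intros n Hn. rewrite sum_single. destruct (Nat.leb_spec j n); [reflexivity|lia].
  - apply filterlim_const.
Qed.

Lemma csum_single (j : nat) (z : C) : csum (fun k => if Nat.eqb k j then z else RtoC 0) = z.
Proof.
  unfold csum. destruct z as [x y].
  f_equal.
  - transitivity (Series (fun k => if Nat.eqb k j then x else 0)).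
    apply Series_ext; intros k; destruct (Nat.eqb k j); reflexivity. apply Series_single.
  - transitivity (Series (fun k => if Nat.eqb k j then y else 0)).
    apply Series_ext; intros k; destruct (Nat.eqb k j); reflexivity. apply Series_single.
Qed.

Definition zc : config := fun _ => 0%nat.
Definition ec (j : nat) : config := fun i => if Nat.eqb i j then 1%nat else 0%nat.
Definition dlt (n0 : config) : fock_vec := fun n => if excluded_middle_informative (n = n0) then RtoC 1 else RtoC 0.

Lemma dlt_fp n0 : fin_config n0 -> finite_particle (dlt n0).
Proof.
  intros H. exists (n0 :: nil). split.
  - intros n Hn. unfold dlt in Hn. destruct (excluded_middle_informative (n = n0)) as [->|]. left; reflexivity.
    contradiction.
  - constructor. exact H. constructor.
Qed.

Lemma fin_zc : fin_config zc.
Proof. exists 0%nat. intros; reflexivity. Qed.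
Lemma fin_ec j : fin_config (ec j).
Proof. exists (S j). intros k Hk. unfold ec. destruct (Nat.eqb_spec k j); [lia|reflexivity]. Qed.

Lemma Cmult_r0 (z : C) : Cmult z (RtoC 0) = RtoC 0.
Proof. destruct z. unfold Cmult, RtoC; simpl. f_equal; ring. Qed.
Lemma Cmult_0r (z : C) : Cmult (RtoC 0) z = RtoC 0.
Proof. destruct z. unfold Cmult, RtoC; simpl. f_equal; ring. Qed.
Lemma Cmult_r1 (z : C) : Cmult z (RtoC 1) = z.
Proof. destruct z. unfold Cmult, RtoC; simpl. f_equal; ring. Qed.
Lemma Cplus_r0 (z : C) : Cplus z (RtoC 0) = z.
Proof. destruct z. unfold Cplus, RtoC; simpl. f_equal; ring. Qed.
Lemma Cplus_0r (z : C) : Cplus (RtoC 0) z = z.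
Proof. destruct z. unfold Cplus, RtoC; simpl. f_equal; ring. Qed.

Lemma lin_beta al be j : lin_field al be (dlt zc) (ec j) = be j.
Proof.
  unfold lin_field. rewrite <- (csum_single j (be j)). f_equal.
  apply functional_extensionality. intros k.
  assert (Hann : ann k (dlt zc) (ec j) = RtoC 0).
  { unfold ann, dlt. destruct (excluded_middle_informative (incr (ec j) k = zc)) as [E|E].
    - exfalso. assert (H := f_equal (fun f => f k) E). unfold incr, zc in H. simpl in H.
      rewrite Nat.eqb_refl in H. lia.
    - apply Cmult_r0. }
  rewrite Hann, Cmult_r0, Cplus_0r.
  unfold cre, dlt. destruct (Nat.eqb_spec k j) as [->|Hne].
  - destruct (excluded_middle_informative (decr (ec j) j = zc)) as [E|E].
    + unfold ec at 1. rewrite Nat.eqb_refl. simpl (INR 1). rewrite sqrt_1, Cmult_r1, Cmult_r1. reflexivity.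
    + exfalso. apply E. apply functional_extensionality. intros i. unfold decr, ec, zc.
      destruct (Nat.eqb_spec i j); reflexivity.
  - unfold ec at 1. destruct (Nat.eqb_spec k j); [contradiction|].
    simpl (INR 0). rewrite sqrt_0, Cmult_0r, Cmult_r0. reflexivity.
Qed.

Lemma lin_alpha al be j : lin_field al be (dlt (ec j)) zc = al j.
Proof.
  unfold lin_field. rewrite <- (csum_single j (al j)). f_equal.
  apply functional_extensionality. intros k.
  assert (Hcre : cre k (dlt (ec j)) zc = RtoC 0).
  { unfold cre, zc. simpl (INR 0). rewrite sqrt_0. apply Cmult_0r. }
  rewrite Hcre, Cmult_r0, Cplus_r0.
  unfold ann, dlt. unfold zc at 1. simpl (0 + 1)%nat. simpl (INR 1). rewrite sqrt_1.
  destruct (Nat.eqb_spec k j) as [->|Hne].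
  - destruct (excluded_middle_informative (incr zc j = ec j)) as [E|E].
    + rewrite !Cmult_r1. reflexivity.
    + exfalso. apply E. apply functional_extensionality. intros i. unfold incr, ec, zc.
      destruct (Nat.eqb_spec i j); reflexivity.
  - destruct (excluded_middle_informative (incr zc k = ec j)) as [E|E].
    + exfalso. assert (H := f_equal (fun f => f j) E). unfold incr, ec, zc in H. simpl in H.
      rewrite Nat.eqb_refl in H. destruct (Nat.eqb_spec j k); [subst; contradiction| discriminate].
    + rewrite Cmult_r0, Cmult_r0. reflexivity.
Qed.

Lemma op_eq_coef al1 be1 al2 be2 : op_eq (lin_field al1 be1) (lin_field al2 be2) ->
  forall j, al1 j = al2 j /\ be1 j = be2 j.
Proof.
  intros H j. split.
  - rewrite <- (lin_alpha al1 be1 j), <- (lin_alpha al2 be2 j). apply H. apply dlt_fp, fin_ec.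
  - rewrite <- (lin_beta al1 be1 j), <- (lin_beta al2 be2 j). apply H. apply dlt_fp, fin_zc.
Qed.

Lemma Cmult_RtoC_zero (r : R) (z : C) : r <> 0 -> RtoC 0 = Cmult (RtoC r) z -> fst z = 0 /\ snd z = 0.
Proof.
  intros Hr H. destruct z as [x y]. unfold Cmult, RtoC in H. simpl in H. injection H. intros H1 H2.
  simpl. split.
  - apply (Rmult_eq_reg_l r). lra. exact Hr.
  - apply (Rmult_eq_reg_l r). lra. exact Hr.
Qed.


Lemma Re_int (f : R -> C) w t :
  Re (Cmult (f t) (cexpi (- w * t))) = Re (f t) * cos (w * t) + Im (f t) * sin (w * t).
Proof.
  unfold Cmult, cexpi, Re, Im. simpl. rewrite <- Ropp_mult_distr_l, cos_neg, sin_neg. ring.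
Qed.
Lemma Im_int (f : R -> C) w t :
  Im (Cmult (f t) (cexpi (- w * t))) = Im (f t) * cos (w * t) - Re (f t) * sin (w * t).
Proof.
  unfold Cmult, cexpi, Re, Im. simpl. rewrite <- Ropp_mult_distr_l, cos_neg, sin_neg. ring.
Qed.

Lemma lim_window (h : R -> R) a b : a <= b -> (forall t, continuity_pt h t) ->
  (forall t, (t < a \/ b < t) -> h t = 0) ->
  real (Lim_seq (fun n => RInt h (- INR n) (INR n))) = RInt h a b.
Proof.
  intros Hab Hh Hz.
  destruct (INR_unbounded (Rmax (Rabs a) (Rabs b))) as [N HN].
  assert (HL : is_lim_seq (fun n => RInt h (- INR n) (INR n)) (RInt h a b)).
  { apply (is_lim_seq_ext_loc (fun _ => RInt h a b)).
    - exists N. intros n Hn. assert (INR N <= INR n) by (apply le_INR; exact Hn).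
      assert (Ha : - INR n <= a). { pose proof (Rmax_l (Rabs a) (Rabs b)). pose proof (Rle_abs (-a)). rewrite Rabs_Ropp in *. lra. }
      assert (Hb : b <= INR n). { pose proof (Rmax_r (Rabs a) (Rabs b)). pose proof (Rle_abs b). lra. }
      assert (Hex : forall x y, ex_RInt h x y) by (intros; apply exRInt_cpt; exact Hh).
      rewrite <- (RInt_Chasles (V := R_CompleteNormedModule) h (- INR n) b (INR n)) by apply Hex.
      rewrite <- (RInt_Chasles (V := R_CompleteNormedModule) h (- INR n) a b) by apply Hex.
      assert (Z1 : RInt h (- INR n) a = 0).
      { rewrite (RInt_ext h (fun _ => 0)). rewrite RInt_const', Rmult_0_r. reflexivity.
        intros x Hx. rewrite Rmin_left, Rmax_right in Hx by lra. apply Hz. lra. }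
      assert (Z2 : RInt h b (INR n) = 0).
      { rewrite (RInt_ext h (fun _ => 0)). rewrite RInt_const', Rmult_0_r. reflexivity.
        intros x Hx. rewrite Rmin_left, Rmax_right in Hx by lra. apply Hz. lra. }
      change (RInt h a b = RInt h (- INR n) a + RInt h a b + RInt h b (INR n)).
      rewrite Z1, Z2. rewrite Rplus_0_r, Rplus_0_l. reflexivity.
    - apply is_lim_seq_const. }
  rewrite (is_lim_seq_unique _ _ HL). reflexivity.
Qed.

Lemma fourier_eval (f : R -> C) a b w : a <= b ->
  (forall t, continuity_pt (fun s => Re (f s)) t) -> (forall t, continuity_pt (fun s => Im (f s)) t) ->
  (forall t, f t <> RtoC 0 -> a <= t <= b) ->
  fourier f w = (RInt (fun t => Re (f t) * cos (w * t) + Im (f t) * sin (w * t)) a b,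
                 RInt (fun t => Im (f t) * cos (w * t) - Re (f t) * sin (w * t)) a b).
Proof.
  intros Hab Hu Hv Hs.
  assert (Hz : forall t, (t < a \/ b < t) -> f t = RtoC 0).
  { intros t Ht. destruct (excluded_middle_informative (f t = RtoC 0)) as [E|E]. exact E.
    apply Hs in E. lra. }
  unfold fourier. apply injective_projections; cbn [fst snd].
  - rewrite (functional_extensionality (fun t => Re (Cmult (f t) (cexpi (- w * t))))
              (fun t => Re (f t) * cos (w * t) + Im (f t) * sin (w * t))) by (intros; apply Re_int).
    apply lim_window. exact Hab. intros t. cpt.
    intros t Ht. rewrite (Hz t Ht). simpl. ring.
  - rewrite (functional_extensionality (fun t => Im (Cmult (f t) (cexpi (- w * t))))
              (fun t => Im (f t) * cos (w * t) - Re (f t) * sin (w * t))) by (intros; apply Im_int).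
    apply lim_window. exact Hab. intros t. cpt.
    intros t Ht. rewrite (Hz t Ht). simpl. ring.
Qed.


Lemma test_cont (f : R -> C) : test_function f ->
  (forall t, continuity_pt (fun s => Re (f s)) t) /\ (forall t, continuity_pt (fun s => Im (f s)) t).
Proof.
  intros [Hd _]. split; intros t; destruct (Hd 1%nat t) as [H1 H2]; simpl in H1, H2;
  apply continuity_pt_filterlim; apply (ex_derive_continuous (K := R_AbsRing) (V := R_NormedModule)); assumption.
Qed.

Theorem proposition8 (S c mu : R) (q cm : nat -> R) (sgn : R) (m : nat) (fm f : R -> C) :
  0 < S -> 0 < c -> 0 < mu ->
  is_q S c q -> is_norm S c q cm ->
  (sgn = 1 \/ sgn = -1) ->
  test_function fm -> test_function f ->
  (exists t : R, f t <> RtoC 0) ->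
  op_eq (phi_mode_smeared sgn mu q m fm) (phi_bdry_smeared sgn S mu q cm f) ->
  ~ (exists a b : R, b - a < 8 / PI * S /\ (forall t : R, f t <> RtoC 0 -> a <= t <= b)).
Proof.
  intros HS Hc Hmu Hq Hn Hsgn Hfm Hf [t0 Ht0] Hop [a [b [Hlen Hsupp]]].
  destruct (test_cont f Hf) as [Hu Hv].
  pose proof PI_RGT_0 as HPI.
  assert (Hab : a <= b) by (pose proof (Hsupp t0 Ht0); lra).
  set (b' := a + ((b - a) + 8 / PI * S) / 2).
  assert (Hb'1 : b <= b') by (unfold b'; lra).
  assert (Hb'2 : a < b').
  { unfold b'. assert (0 < 8 / PI * S) by (apply Rmult_lt_0_compat; [apply Rdiv_lt_0_compat; lra| lra]). lra. }
  assert (Hb'3 : b' - a < 8 / PI * S) by (unfold b'; lra).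
  assert (Hsupp' : forall t, f t <> RtoC 0 -> a <= t <= b') by (intros t Ht; pose proof (Hsupp t Ht); lra).
  set (delta := PI / (2 * S)).
  assert (Hdel : 0 < delta) by (unfold delta; apply Rdiv_lt_0_compat; lra).
  assert (Hr : (b' - a) * delta / 4 < 1).
  { unfold delta. apply (Rmult_lt_compat_r (PI / (8 * S))) in Hb'3. 2: apply Rdiv_lt_0_compat; lra.
    replace (8 / PI * S * (PI / (8 * S))) with 1 in Hb'3 by (field; lra).
    replace ((b' - a) * (PI / (2 * S)) / 4) with ((b' - a) * (PI / (8 * S))) by (field; lra). exact Hb'3. }
  destruct Hq as [Hq0 Hqr] eqn:Hqq. clear Hqq.
  assert (HqB : forall k, (1 <= k)%nat -> (INR k - 1) * delta < q k < INR k * delta).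
  { intros k Hk. apply (q_bounds S c q HS Hq k Hk). }
  assert (Hq_nn : forall k, 0 <= q k).
  { intros k. destruct k as [|k]. rewrite Hq0; lra. destruct (HqB (Datatypes.S k) ltac:(lia)) as [A _].
    rewrite S_INR in A. pose proof (pos_INR k). nra. }
  assert (Hq_hi : forall k, q k <= INR k * delta).
  { intros k. destruct k as [|k]. rewrite Hq0; simpl; lra. left. apply HqB. lia. }
  set (om := omega mu q).
  assert (Hom_pos : forall k, 0 < om k).
  { intros k. unfold om, omega. apply sqrt_lt_R0. pose proof (pow2_ge_0 (q k)). simpl. nra. }
  assert (Hom_ge : forall k, q k <= om k).
  { intros k. unfold om, omega. rewrite <- (sqrt_pow2 (q k)) at 1 by apply Hq_nn.
    apply sqrt_le_1_alt. simpl. nra. }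
  assert (Hom_le : forall k, om k <= q k + mu).
  { intros k. unfold om, omega. rewrite <- (sqrt_pow2 (q k + mu)) by (pose proof (Hq_nn k); lra).
    apply sqrt_le_1_alt. pose proof (Hq_nn k). simpl. nra. }
  assert (Hq_lt : forall k l, (k < l)%nat -> q k < q l).
  { intros k l Hkl. destruct (HqB l ltac:(lia)) as [A _].
    assert (INR k <= INR l - 1).
    { replace (INR l - 1) with (INR (l - 1)) by (rewrite minus_INR by lia; reflexivity). apply le_INR. lia. }
    destruct k as [|k].
    - rewrite Hq0. eapply Rle_lt_trans; [|exact A]. apply Rmult_le_pos; [|lra].
      change 1 with (INR 1). rewrite <- minus_INR by lia. apply pos_INR.
    - destruct (HqB (Datatypes.S k) ltac:(lia)) as [_ B]. nra. }
  assert (Hom_lt : forall k l, (k < l)%nat -> om k < om l).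
  { intros k l Hkl. unfold om, omega. apply sqrt_lt_1_alt. split.
    pose proof (pow2_ge_0 (q k)). pose proof (pow2_ge_0 mu). lra.
    pose proof (Hq_lt k l Hkl). pose proof (Hq_nn k). simpl. nra. }
  assert (Hom_lo : forall k, (INR k - 1) * delta < om k).
  { intros k. destruct k as [|k].
    - simpl. pose proof (Hom_pos 0%nat). nra.
    - destruct (HqB (Datatypes.S k) ltac:(lia)) as [A _]. pose proof (Hom_ge (Datatypes.S k)). lra. }
  assert (Hom_hi : forall k, om k <= INR k * delta + mu).
  { intros k. pose proof (Hom_le k). pose proof (Hq_hi k). lra. }
  pose proof (op_eq_coef _ _ _ _ Hop) as Hco.
  assert (Hcoef : forall k, sgn ^ k * dcoef S q cm k / sqrt (2 * omega mu q k) <> 0).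
  { intros k. unfold Rdiv. apply Rmult_integral_contrapositive. split.
    - apply Rmult_integral_contrapositive. split.
      + apply pow_nonzero. lra.
      + unfold dcoef. apply Rmult_integral_contrapositive. split.
        * unfold Rdiv. apply Rmult_integral_contrapositive. split.
          -- destruct (Hn k) as [Hck _]. lra.
          -- apply Rinv_neq_0_compat. apply Rgt_not_eq. apply sqrt_lt_R0. lra.
        * apply (chi_S_nonzero S c q HS Hq).
    - apply Rinv_neq_0_compat. apply Rgt_not_eq. apply sqrt_lt_R0. pose proof (Hom_pos k). unfold om in *. lra. }
  assert (Hzero : forall k w, k <> m -> (w = om k \/ w = - om k) ->
     RInt (fun t => Re (f t) * cos (w * t) + Im (f t) * sin (w * t)) a b' = 0 /\
     RInt (fun t => Im (f t) * cos (w * t) - Re (f t) * sin (w * t)) a b' = 0).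
  { intros k w Hk Hw. destruct (Hco k) as [Hal Hbe].
    assert (Hkm : Nat.eqb k m = false) by (apply Nat.eqb_neq; exact Hk).
    rewrite Hkm in Hal, Hbe.
    change (omega mu q k) with (om k) in Hal, Hbe. destruct Hw as [-> | ->].
    - apply Cmult_RtoC_zero in Hal; [|apply Hcoef].
      rewrite (fourier_eval f a b' (om k)) in Hal by (auto; lra). simpl in Hal. exact Hal.
    - apply Cmult_RtoC_zero in Hbe; [|apply Hcoef].
      rewrite (fourier_eval f a b' (- om k)) in Hbe by (auto; lra). simpl in Hbe. exact Hbe. }
  destruct (core (fun s => Re (f s)) (fun s => Im (f s)) a b' delta mu om m Hb'2 Hu Hv Hdel Hr
             ltac:(lra) Hom_lt Hom_lo Hom_hi Hzero t0) as [Z1 Z2].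
  { pose proof (Hsupp t0 Ht0). lra. }
  apply Ht0. destruct (f t0) as [x y] eqn:E. unfold Re, Im in Z1, Z2. simpl in Z1, Z2.
  rewrite Z1, Z2. reflexivity.
Qed.
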